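(* Let $V\in\mathcal{R}$. For every generating sequence $(u_m)$ of $V$, the sequence $(\rho_{u_m})$ is nondecreasing, so $\lim_{m\to\infty}\rho_{u_m}$ exists in $[0,+\infty]$; moreover this limit is the same for all generating sequences of $V$ (in particular it equals $\lim_n\rho_{v_n}$ for the canonical generating sequence $(v_n)$ of $V$).
   Context: $\mathcal{F}$ is the set of finite words over $\{0,1\}$ that start and end with $0$. For a finite word $\alpha$, $Y(\alpha)$, $Z(\alpha)$ are the numbers of $1$s and $0$s in $\alpha$ and $\rho_\alpha=Y(\alpha)/Z(\alpha)$. For $u,v\in\mathcal{F}$, $u$ is built from $v$ if $u=v1^{a_1}v\cdots v1^{a_{q-1}}v$ for some $q\ge2$ and nonnegative integers $a_i$; it is built simply from $v$ if moreover $a_1=\dots=a_{q-1}$. A generating sequence is a sequence $(v_n)$ in $\mathcal{F}$ with $v_0=0$ and each $v_{n+1}$ built from $v_n$. An infinite word $V\in\{0,1\}^{\mathbb{N}}$ is a rank one word if there is a generating sequence $(v_n)$ with $V\upharpoonright\mathrm{lh}(v_n)=v_n$ for all $n$; $\mathcal{R}$ is the set of rank one words that are aperiodic (nondegenerate). $V$ is built from $v\in\mathcal{F}$ if $V=v1^{a_1}v1^{a_2}v\cdots$ for nonnegative integers $a_i$. An element $v\in\mathcal{F}$ belongs to the canonical generating sequence of $V$ if $V$ is built from $v$ and there are no $u,w\in\mathcal{F}$ with $\mathrm{lh}(u)<\mathrm{lh}(v)<\mathrm{lh}(w)$, $V$ built from both $u$ and $w$, $w$ built from $u$, $u$ built from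 $v$, and $w$ built simply from $u$; these elements, listed by increasing length, form a generating sequence of $V$ (the canonical generating sequence). *)

(* Defs.v *)
From Stdlib Require Import Reals List Arith.
Import ListNotations.
Open Scope R_scope.

(* Finite words over {0,1}: list bool, with false = 0 and true = 1. *)
Definition word := list bool.

Definition Y (a : word) : nat := length (filter (fun b => b) a).
Definition Z (a : word) : nat := length (filter negb a).

Definition rho (a : word) : R := INR (Y a) / INR (Z a).

Definition inF (a : word) : Prop :=
  a <> [] /\ hd true a = false /\ last a true = false.

(* u is built from v: u = v 1^{a_1} v ... v 1^{a_{q-1}} v with q >= 2;
   the list as = [a_1; ...; a_{q-1}] is nonempty. *)
Definition built_from (u v : word) : Prop :=
  exists as_ : list nat, as_ <> [] /\
    u = v ++ concat (map (fun a => repeat true a ++ v) as_).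

Definition generating_sequence (v : nat -> word) : Prop :=
  (forall n, inF (v n)) /\ v 0%nat = [false] /\
  (forall n, built_from (v (S n)) (v n)).

Definition infword := nat -> bool.

Definition is_prefix (w : word) (V : infword) : Prop :=
  forall i, (i < length w)%nat -> nth i w false = V i.

Definition gen_seq_of (V : infword) (v : nat -> word) : Prop :=
  generating_sequence v /\ forall n, is_prefix (v n) V.

Definition rank_one (V : infword) : Prop := exists v, gen_seq_of V v.

Definition aperiodic (V : infword) : Prop :=
  ~ exists p : nat, (0 < p)%nat /\ forall i, V (i + p)%nat = V i.

Definition in_calR (V : infword) : Prop := rank_one V /\ aperiodic V.

(* Convergence to a limit in [0,+oo]: None stands for +oo. *)
Definition cv_ext (u : nat -> R) (L : option R) : Prop :=
  match L with
  | Some l => Un_cv u l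
  | None => cv_infty u
  end.

(* Main.v *)
Require Import Defs.
From Stdlib Require Import Reals List Arith.
From Stdlib Require Import Lia Lra Classical.
Import ListNotations. Import Defs.
Open Scope R_scope.
Lemma real_key (yw zw yu zu eps : R) : 0 < zw -> 0 < zu ->
  yw * zu <= zw * yu + yw * zw -> zu * eps > yw -> yw / zw - eps < yu / zu.
Proof.
  intros Hzw Hzu H He.
  set (a := yu / zu). set (b := yw / zw).
  assert (Ha : yu = a * zu) by (unfold a; field; lra).
  assert (Hb : yw = b * zw) by (unfold b; field; lra).
  rewrite Ha, Hb in H. rewrite Hb in He.
  assert (H1 : b * zu <= a * zu + b * zw).
  { apply Rmult_le_reg_l with zw; auto. nra. }
  assert (H2 : b * zw < zu * eps) by lra.
  assert (H3 : b * zu < a * zu + zu * eps) by lra.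
  assert (b < a + eps). { apply Rmult_lt_reg_r with zu; auto. nra. }
  lra.
Qed.

Lemma grow_le (a : nat -> R) : Un_growing a -> forall n m, (n <= m)%nat -> a n <= a m.
Proof. intros H n m Hnm. pose proof (growing_prop a m n H Hnm). lra. Qed.


Lemma exists_lim (b : nat -> R) : Un_growing b -> (forall n, 0 <= b n) ->
  exists L, (forall l, L = Some l -> 0 <= l) /\ cv_ext b L.
Proof.
  intros Hg H0.
  destruct (classic (has_ub b)) as [Hb|Hb].
  - destruct (growing_cv b Hg Hb) as [l Hl]. exists (Some l). split.
    + intros l' E; injection E as <-. pose proof (growing_ineq b l Hg Hl 0%nat).
      specialize (H0 0%nat). lra.
    + exact Hl.
  - exists None. split; [discriminate|]. simpl. intros M.
    apply NNPP. intros Hn. apply Hb. exists M. intros x [n ->].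
    apply Rnot_lt_le. intros Hlt. apply Hn. exists n. intros m Hm.
    pose proof (grow_le b Hg n m Hm). lra.
Qed.

Lemma same_lim (a b : nat -> R) : Un_growing a -> Un_growing b ->
  (forall k eps, 0 < eps -> exists N, forall n, (N <= n)%nat -> b k - eps < a n) ->
  (forall k eps, 0 < eps -> exists N, forall n, (N <= n)%nat -> a k - eps < b n) ->
  forall L, cv_ext b L -> cv_ext a L.
Proof.
  intros Ga Gb Hab Hba [l|] Hb; simpl in *.
  - assert (Hle : forall n, a n <= l).
    { intros n. apply Rnot_lt_le. intros Hlt.
      destruct (Hba n ((a n - l)/2)) as [N HN]; [lra|].
      specialize (HN N (le_n N)). pose proof (growing_ineq b l Gb Hb N). lra. }
    intros eps He. destruct (Hb (eps/2)) as [K HK]; [lra|].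
    specialize (HK K (le_n K)). unfold R_dist in HK.
    destruct (Hab K (eps/2)) as [N HN]; [lra|].
    exists N. intros n Hn. unfold R_dist. specialize (HN n Hn). specialize (Hle n).
    apply Rabs_def1; apply Rabs_def2 in HK; lra.
  - intros M. destruct (Hb (M+1)) as [K HK]. specialize (HK K (le_n K)).
    destruct (Hab K 1) as [N HN]; [lra|]. exists N. intros n Hn.
    specialize (HN n Hn). lra.
Qed.
Definition C (w : word) (as_ : list nat) : word :=
  concat (map (fun a => repeat true a ++ w) as_).

Lemma Y_app a b : Y (a ++ b) = (Y a + Y b)%nat.
Proof. unfold Y. rewrite filter_app, length_app. reflexivity. Qed.
Lemma Z_app a b : Z (a ++ b) = (Z a + Z b)%nat.
Proof. unfold Z. rewrite filter_app, length_app. reflexivity. Qed.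
Lemma Y_rep a : Y (repeat true a) = a.
Proof. induction a; simpl; auto. unfold Y in *; simpl; lia. Qed.
Lemma Z_rep a : Z (repeat true a) = 0%nat.
Proof. induction a; simpl; auto. Qed.

Lemma YC w as_ : Y (C w as_) = (length as_ * Y w + list_sum as_)%nat.
Proof. induction as_; simpl; auto. unfold C in *; simpl.
  rewrite !Y_app, Y_rep, IHas_. lia. Qed.
Lemma ZC w as_ : Z (C w as_) = (length as_ * Z w)%nat.
Proof. induction as_; simpl; auto. unfold C in *; simpl.
  rewrite !Z_app, Z_rep, IHas_. lia. Qed.

Lemma C_app w l1 l2 : C w (l1 ++ l2) = C w l1 ++ C w l2.
Proof. unfold C. rewrite map_app, concat_app. reflexivity. Qed.

Lemma C_cons w a l : C w (a::l) = (repeat true a ++ w) ++ C w l.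
Proof. reflexivity. Qed.

Lemma C_comp w bs as_ :
  C (w ++ C w bs) as_ = C w (concat (map (fun a => a :: bs) as_)).
Proof.
  induction as_; simpl; auto.
  rewrite !C_cons, C_app, IHas_. rewrite !app_assoc. reflexivity.
Qed.

Definition D (w x : word) := exists as_, x = w ++ C w as_.

Lemma D_refl w : D w w.
Proof. exists []. unfold C; simpl. now rewrite app_nil_r. Qed.

Lemma D_built w y x : D w y -> built_from x y -> D w x.
Proof.
  intros [bs ->] [as_ [_ ->]].
  exists (bs ++ concat (map (fun a => a :: bs) as_)).
  fold (C (w ++ C w bs) as_). rewrite C_comp, C_app, app_assoc. reflexivity.
Qed.

Lemma Z_firstn k l : (Z (firstn k l) <= Z l)%nat.
Proof. rewrite <- (firstn_skipn k l) at 2. rewrite Z_app. lia. Qed.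

Lemma prefix_ineq w as_ N :
  (Y w * Z (firstn N (w ++ C w as_)) <=
   Z w * Y (firstn N (w ++ C w as_)) + Y w * Z w)%nat.
Proof.
  revert N; induction as_ as [|a as_ IH]; intros N.
  - unfold C; simpl. rewrite app_nil_r. pose proof (Z_firstn N w). nia.
  - assert (E : w ++ C w (a :: as_) = w ++ repeat true a ++ (w ++ C w as_)).
    { unfold C; simpl. rewrite !app_assoc. reflexivity. }
    rewrite E. revert IH. generalize (w ++ C w as_). intros r IH. rewrite !firstn_app. rewrite repeat_length.
    destruct (le_lt_dec N (length w)) as [Hle|Hlt].
    + replace (N - length w)%nat with 0%nat by lia. simpl.
      rewrite !app_nil_r. pose proof (Z_firstn N w). nia.
    + rewrite (@firstn_all2 bool N w) by lia.
      specialize (IH (N - length w - a)%nat).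
      rewrite !Y_app, !Z_app.
      pose proof (Z_firstn (N - length w) (repeat true a)) as H0.
      rewrite Z_rep in H0. nia.
Qed.
Lemma YZ_built x y : built_from x y ->
  (2 * Z y <= Z x)%nat /\ (Z x * Y y <= Y x * Z y)%nat.
Proof.
  intros [as_ [Hne ->]]. fold (C y as_). rewrite Y_app, Z_app, YC, ZC.
  destruct as_ as [|a l]; [congruence|]. simpl length. split; nia.
Qed.

Lemma Z_le_len l : (Z l <= length l)%nat.
Proof. induction l as [|[] l IH]; unfold Z in *; simpl; lia. Qed.

Section S.
Variable V : infword.

Lemma gen_Z u : gen_seq_of V u -> forall n, (S n <= Z (u n))%nat.
Proof.
  intros [[_ [H0 Hb]] _] n. induction n.
  - rewrite H0. unfold Z; simpl; lia.
  - destruct (YZ_built _ _ (Hb n)). lia.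
Qed.

Lemma gen_D u : gen_seq_of V u -> forall k n, (k <= n)%nat -> D (u k) (u n).
Proof.
  intros [[_ [_ Hb]] _] k n Hkn. induction Hkn.
  - apply D_refl.
  - eapply D_built; eauto.
Qed.

Lemma pref_eq w x : is_prefix w V -> is_prefix x V -> (length w <= length x)%nat ->
  w = firstn (length w) x.
Proof.
  intros Hw Hx Hl. apply nth_ext with (d := false) (d' := false).
  - rewrite length_firstn. lia.
  - intros i Hi. rewrite nth_firstn.
    replace (i <? length w)%nat with true by (symmetry; apply Nat.ltb_lt; lia).
    rewrite Hw, Hx; auto; lia.
Qed.

Lemma key_nat u w : gen_seq_of V u -> gen_seq_of V w -> forall k n,
  (Y (w k) * Z (u n) <= Z (w k) * Y (u n) + Y (w k) * Z (w k))%nat.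
Proof.
  intros Hu Hw k n.
  set (m := Nat.max k (length (u n))).
  assert (Hlen : (length (u n) <= length (w m))%nat).
  { pose proof (gen_Z w Hw m). pose proof (Z_le_len (w m)). unfold m in *. lia. }
  rewrite (pref_eq (u n) (w m)) by (apply Hu || apply Hw || exact Hlen).
  destruct (gen_D w Hw k m) as [as_ ->]. { unfold m; lia. }
  apply prefix_ineq.
Qed.

Lemma rho_nonneg x : 0 <= rho x.
Proof. unfold rho, Rdiv. destruct (Req_dec (INR (Z x)) 0) as [E|E].
  - rewrite E, Rinv_0. lra.
  - apply Rmult_le_pos; [apply pos_INR|]. left. apply Rinv_0_lt_compat.
    pose proof (pos_INR (Z x)). lra. Qed.

Lemma gen_grow u : gen_seq_of V u -> Un_growing (fun m => rho (u m)).
Proof.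
  intros Hu n. pose proof (gen_Z u Hu n) as Hz. destruct Hu as [[_ [_ Hb]] _].
  destruct (YZ_built _ _ (Hb n)) as [H1 H2].
  unfold rho. apply INR_le in H1 || idtac.
  assert (A : 0 < INR (Z (u n))) by (apply lt_0_INR; lia).
  assert (B : 0 < INR (Z (u (S n)))) by (apply lt_0_INR; lia).
  apply le_INR in H2. rewrite !mult_INR in H2.
  unfold Rdiv. apply Rmult_le_reg_r with (INR (Z (u n)) * INR (Z (u (S n)))).
  - nra.
  - replace (INR (Y (u n)) * / INR (Z (u n)) * (INR (Z (u n)) * INR (Z (u (S n)))))
      with (INR (Z (u (S n))) * INR (Y (u n))) by (field; lra).
    replace (INR (Y (u (S n))) * / INR (Z (u (S n))) * (INR (Z (u n)) * INR (Z (u (S n)))))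
      with (INR (Y (u (S n))) * INR (Z (u n))) by (field; lra).
    exact H2.
Qed.

Lemma key_real u w : gen_seq_of V u -> gen_seq_of V w ->
  forall k eps, 0 < eps -> exists N, forall n, (N <= n)%nat ->
    rho (w k) - eps < rho (u n).
Proof.
  intros Hu Hw k eps He.
  destruct (INR_archimed eps (INR (Y (w k))) He) as [N HN].
  exists N. intros n Hn. unfold rho. apply real_key.
  - apply lt_0_INR. pose proof (gen_Z w Hw k). lia.
  - apply lt_0_INR. pose proof (gen_Z u Hu n). lia.
  - rewrite <- !mult_INR, <- plus_INR. apply le_INR. apply key_nat; auto.
  - assert (INR N <= INR (Z (u n))) by (apply le_INR; pose proof (gen_Z u Hu n); lia).
    nra.
Qed.
End S.

Theorem mainTheorem3 (V : infword) (HV : in_calR V) :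
  (forall u : nat -> word, gen_seq_of V u ->
     Un_growing (fun m => rho (u m))) /\
  (exists L : option R,
     (forall l, L = Some l -> 0 <= l) /\
     forall u : nat -> word, gen_seq_of V u ->
       cv_ext (fun m => rho (u m)) L).
Proof.
  destruct HV as [[v Hv] _]. split.
  - apply gen_grow.
  - destruct (exists_lim (fun m => rho (v m)) (gen_grow V v Hv) (fun n => rho_nonneg _))
      as [L [HL HcvL]].
    exists L. split; auto. intros u Hu.
    apply (same_lim _ (fun m => rho (v m))).
    + apply (gen_grow V u Hu).
    + apply (gen_grow V v Hv).
    + apply (key_real V u v); auto.
    + apply (key_real V v u); auto.
    + exact HcvL.
Qed.
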